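(* Let $f:\mathbb{R}^d\to\mathbb{R}$ be $\beta$-smooth with minimum value $f^\star$, and run AdaSGD (as defined in the context) with parameters $\eta,\gamma>0$ using a stochastic gradient oracle with bounded affine noise with parameters $\sigma_0,\sigma_1\ge0$. Then for all $t\ge1$, $$\sum_{s=1}^t|\tilde\eta_s-\eta_s|\,(\nabla f(w_s)\cdot g_s)\le\frac{\bar\Delta_t}4+\frac12\sum_{s=1}^t\tilde\eta_s\|\nabla f(w_s)\|^2+2\eta\sigma_0\sum_{s=1}^t\frac{\|g_s\|^2}{G_s^2}+8\eta^2\beta\sigma_1^2\Big(\sum_{s=1}^t\frac{\|g_s\|^2}{G_s^2}\Big)^2.$$
   Context: $\|\cdot\|$ is the Euclidean norm. $\beta$-smooth: $\|\nabla f(x)-\nabla f(y)\|\le\beta\|x-y\|$. Oracle: queried at $w$, returns random $g(w)$ with $\mathbb{E}[g(w)\mid w]=\nabla f(w)$ and, with probability one, $\|g(w)-\nabla f(w)\|^2\le\sigma_0^2+\sigma_1^2\|\nabla f(w)\|^2$. AdaSGD: arbitrary $w_1$; for each $t$, $g_t=g(w_t)$, $G_t=\sqrt{\gamma^2+\sum_{s=1}^t\|g_s\|^2}$ (so $G_0=\gamma$), $\eta_t=\eta/G_t$, $w_{t+1}=w_t-\eta_tg_t$. Decorrelated step sizes: $\tilde\eta_t=\eta/\sqrt{G_{t-1}^2+(1+\sigma_1^2)\|\nabla f(w_t)\|^2+\sigma_0^2}$. $\bar\Delta_t=\max_{s\le t}f(w_s)-f^\star$. *)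

(* Defs.v *)
From HB Require Import structures.
From mathcomp Require Import all_boot all_order all_algebra.
From mathcomp Require Import all_classical all_reals all_analysis.
Set Implicit Arguments. Unset Strict Implicit. Unset Printing Implicit Defensive.
Import Order.TTheory GRing.Theory Num.Theory.
Import numFieldNormedType.Exports.
Local Open Scope ring_scope.

Definition dotv {R : realType} {d : nat} (u v : 'rV[R]_d) : R :=
  \sum_(i < d) u ord0 i * v ord0 i.
Definition sqnorm {R : realType} {d : nat} (v : 'rV[R]_d) : R := dotv v v.
Definition enorm {R : realType} {d : nat} (v : 'rV[R]_d) : R := Num.sqrt (sqnorm v).

Definition is_gradient {R : realType} {d : nat}
  (f : 'rV[R]_d -> R) (gradf : 'rV[R]_d -> 'rV[R]_d) : Prop :=
  forall w, differentiable f w /\ forall v, ('d f w : 'rV[R]_d -> R) v = dotv (gradf w) v.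

Definition smooth {R : realType} {d : nat} (beta : R) (gradf : 'rV[R]_d -> 'rV[R]_d) : Prop :=
  forall x y, enorm (gradf x - gradf y) <= beta * enorm (x - y).

Definition Gacc {R : realType} {d : nat} (gamma : R) (g : nat -> 'rV[R]_d) (t : nat) : R :=
  Num.sqrt (gamma ^+ 2 + \sum_(1 <= s < t.+1) sqnorm (g s)).

Definition eta_ada {R : realType} {d : nat} (eta gamma : R) (g : nat -> 'rV[R]_d) (t : nat) : R :=
  eta / Gacc gamma g t.

Definition eta_dec {R : realType} {d : nat} (eta gamma sigma0 sigma1 : R)
  (gradf : 'rV[R]_d -> 'rV[R]_d) (w g : nat -> 'rV[R]_d) (t : nat) : R :=
  eta / Num.sqrt (Gacc gamma g t.-1 ^+ 2 + (1 + sigma1 ^+ 2) * sqnorm (gradf (w t))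
                  + sigma0 ^+ 2).

Definition Delta_bar {R : realType} {d : nat} (f : 'rV[R]_d -> R) (fstar : R)
  (w : nat -> 'rV[R]_d) (t : nat) : R :=
  \big[Num.max/f (w 1%N)]_(1 <= s < t.+1) f (w s) - fstar.

(* Main.v *)
Require Import Defs.
From HB Require Import structures.
From mathcomp Require Import all_boot all_order all_algebra.
From mathcomp Require Import all_classical all_reals all_analysis.
From mathcomp Require Import ring lra.
Import Order.TTheory GRing.Theory Num.Theory.
Import numFieldNormedType.Exports.
Local Open Scope ring_scope.
Local Open Scope classical_set_scope.


Lemma dphi {R : realType} {d : nat} {f : 'rV[R]_d -> R} {gradf : 'rV[R]_d -> 'rV[R]_d} (hg : is_gradient f gradf) (x v : 'rV[R]_d) (t : R) :
  is_derive t 1 (fun s : R => f (s *: v + x)) (dotv (gradf (t *: v + x)) v).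
Proof.
have hd : is_diff t (fun s : R => s *: v + x) (fun s => s *: v + 0).
  apply: (@is_diffD _ _ _ (fun s : R => s *: v) (cst x)).
have df := (hg (t *: v + x)).1.
have dc : differentiable (f \o (fun s : R => s *: v + x)) t.
  apply: differentiable_comp => //. 
apply: DeriveDef.
  by apply/derivable1_diffP.
rewrite deriveE //= diff_comp //.
rewrite /= diff_val scale1r addr0.
by rewrite (hg _).2.
Qed.

Lemma dotvBl {R : realType} {d : nat} (u w v : 'rV[R]_d) : dotv (u - w) v = dotv u v - dotv w v.
Proof.
rewrite /dotv -sumrB; apply: eq_bigr => i _; rewrite !mxE; ring.
Qed.
Lemma dotvZr {R : realType} {d : nat} (u v : 'rV[R]_d) c : dotv u (c *: v) = c * dotv u v.
Proof. rewrite /dotv mulr_sumr; apply: eq_bigr => i _; rewrite !mxE; ring. Qed.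
Lemma dotvZl {R : realType} {d : nat} (u v : 'rV[R]_d) c : dotv (c *: u) v = c * dotv u v.
Proof. rewrite /dotv mulr_sumr; apply: eq_bigr => i _; rewrite !mxE; ring. Qed.
Lemma dotvC {R : realType} {d : nat} (u v : 'rV[R]_d) : dotv u v = dotv v u.
Proof. rewrite /dotv; apply: eq_bigr => i _; ring. Qed.
Lemma sqnorm_ge0 {R : realType} {d : nat} (u : 'rV[R]_d) : 0 <= sqnorm u.
Proof. rewrite /sqnorm /dotv; apply: sumr_ge0 => i _; exact: sqr_ge0. Qed.
Lemma sqnormZ {R : realType} {d : nat} (u : 'rV[R]_d) c : sqnorm (c *: u) = c ^+ 2 * sqnorm u.
Proof. by rewrite /sqnorm dotvZl dotvZr mulrA expr2. Qed.
Lemma sqnormB {R : realType} {d : nat} (u v : 'rV[R]_d) : sqnorm (u - v) = sqnorm u - 2 * dotv u v + sqnorm v.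
Proof.
rewrite /sqnorm /dotv mulr_sumr -sumrB -big_split /=; apply: eq_bigr => i _; rewrite !mxE; ring.
Qed.
Lemma enorm_ge0 {R : realType} {d : nat} (u : 'rV[R]_d) : 0 <= enorm u.
Proof. exact: sqrtr_ge0. Qed.
Lemma enorm_sq {R : realType} {d : nat} (u : 'rV[R]_d) : enorm u ^+ 2 = sqnorm u.
Proof. by rewrite /enorm sqr_sqrtr // sqnorm_ge0. Qed.

Lemma amgm_dot {R : realType} {d : nat} (u v : 'rV[R]_d) c : 0 < c -> 2 * dotv u v <= c * sqnorm u + c^-1 * sqnorm v.
Proof.
move=> c0; rewrite /sqnorm /dotv !mulr_sumr -big_split /=; apply: ler_sum => i _.
have : 0 <= c^-1 * (c * u ord0 i - v ord0 i) ^+ 2 by apply: mulr_ge0; [rewrite invr_ge0 ltW | exact: sqr_ge0].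
have E : c * (u ord0 i * u ord0 i) + c^-1 * (v ord0 i * v ord0 i) - 2 * (u ord0 i * v ord0 i) = c^-1 * (c * u ord0 i - v ord0 i) ^+ 2.
  by field; rewrite gt_eqF.
by move=> h; rewrite -subr_ge0 E.
Qed.

Lemma cs {R : realType} {d : nat} (u v : 'rV[R]_d) : dotv u v <= enorm u * enorm v.
Proof.
have [u0|] := eqVneq (enorm u) 0.
  have : sqnorm u = 0 by rewrite -enorm_sq u0 expr2 mul0r.
  rewrite /sqnorm /dotv => /eqP; rewrite psumr_eq0; last by move=> i _; exact: sqr_ge0.
  move=> /allP H; rewrite u0 mul0r big1 // => i _.
  have /H : i \in index_enum 'I_d by rewrite mem_index_enum.
  by rewrite /= mulf_eq0 orbb => /eqP ->; rewrite mul0r.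
have [v0|] := eqVneq (enorm v) 0.
  have : sqnorm v = 0 by rewrite -enorm_sq v0 expr2 mul0r.
  rewrite /sqnorm /dotv => /eqP; rewrite psumr_eq0; last by move=> i _; exact: sqr_ge0.
  move=> /allP H; rewrite v0 mulr0 big1 // => i _.
  have /H : i \in index_enum 'I_d by rewrite mem_index_enum.
  by rewrite /= mulf_eq0 orbb => /eqP ->; rewrite mulr0.
move=> vn un.
have up : 0 < enorm u by rewrite lt_def un enorm_ge0.
have vp : 0 < enorm v by rewrite lt_def vn enorm_ge0.
have := @amgm_dot R d u v _ (divr_gt0 vp up).
rewrite -!enorm_sq invf_div.
have -> : enorm v / enorm u * enorm u ^+ 2 = enorm u * enorm v.
  by rewrite expr2 mulrA divfK ?gt_eqF // mulrC.
have -> : enorm u / enorm v * enorm v ^+ 2 = enorm u * enorm v.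
  by rewrite expr2 mulrA divfK ?gt_eqF.
lra.
Qed.


Lemma enormZ {R : realType} {d : nat} (v : 'rV[R]_d) t : enorm (t *: v) = `|t| * enorm v.
Proof. by rewrite /enorm sqnormZ sqrtrM ?sqr_ge0 // sqrtr_sqr. Qed.

Lemma descent {R : realType} {d : nat} {f : 'rV[R]_d -> R} {gradf : 'rV[R]_d -> 'rV[R]_d} (hg : is_gradient f gradf) beta (x v : 'rV[R]_d) : smooth beta gradf ->
  f (v + x) <= f x + dotv (gradf x) v + beta / 2 * sqnorm v.
Proof.
move=> sm.
set D := dotv (gradf x) v; set S := sqnorm v.
pose psi : R -> R := (fun s : R => f (s *: v + x)) - ((fun s : R => s) * cst D)
   - (cst (beta / 2 * S) * ((fun s : R => s) * (fun s : R => s))).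
have Dpsi (t : R) : is_derive t (1:R) psi (dotv (gradf (t *: v + x)) v - D - beta * t * S).
  have H := dphi hg x v t.
  rewrite /psi; apply: is_derive_eq.
  have E (a b : R) : a *: b = a * b by [].
  rewrite /cst /= !E !mulr0 mulr1 !addr0 add0r !mulr1; by field.
have key : psi 1 <= psi 0.
  apply: (ler0_derive1_le_cc (f:=psi) (a:=0) (b:=1)).
  - by move=> y _; exact: (Dpsi y).(ex_derive).
  - move=> y; rewrite in_itv /= => /andP[y0 y1].
    rewrite derive1E derive_val.
    have h1 : dotv (gradf (y *: v + x)) v - D <= beta * y * S.
      rewrite /D -dotvBl; apply: le_trans (cs _ _) _.
      have := sm (y *: v + x) x; rewrite addrK enormZ gtr0_norm //.
      move=> h; apply: le_trans (ler_wpM2r (enorm_ge0 v) h) _.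
      by rewrite /S -enorm_sq expr2 !mulrA.
    lra.
  - by apply: derivable_within_continuous => y _; exact: (Dpsi y).(ex_derive).
  - by rewrite in_itv /= ler01 lexx.
  - by rewrite in_itv /= ler01 lexx.
  - exact: ler01.
have e1 : psi 1 = f (1 *: v + x) - 1 * D - beta / 2 * S * (1 * 1) by [].
have e0 : psi 0 = f (0 *: v + x) - 0 * D - beta / 2 * S * (0 * 0) by [].
move: key; rewrite e1 e0 scale1r scale0r add0r !mulr0 !mul0r !subr0 !mulr1 mul1r.
lra.
Qed.



Lemma grad_bound {R : realType} {d : nat} {f : 'rV[R]_d -> R} {gradf : 'rV[R]_d -> 'rV[R]_d} (hg : is_gradient f gradf) beta fstar x : smooth beta gradf -> (forall y, fstar <= f y) ->
  0 <= beta -> sqnorm (gradf x) <= 2 * beta * (f x - fstar).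
Proof.
move=> sm fs b0.
set N2 := sqnorm (gradf x).
have N0 : 0 <= N2 := sqnorm_ge0 _.
have H c : c * N2 - beta / 2 * c ^+ 2 * N2 <= f x - fstar.
  have := @descent R d f gradf hg beta x ((- c) *: gradf x) sm.
  rewrite dotvZr sqnormZ sqrrN -/N2.
  have := fs ((- c) *: gradf x + x). change (dotv (gradf x) (gradf x)) with N2; lra.
have [bz|bp] := eqVneq beta 0.
  rewrite bz mul0r mulr0 in H *.
  rewrite mul0r; case: (eqVneq N2 0) => [E|Np]; first by rewrite E.
  have Np' : 0 < N2 by rewrite lt_def Np N0.
  have := H ((f x - fstar + 1) / N2).
  rewrite mul0r divfK ?gt_eqF //. lra.
have bp' : 0 < beta by rewrite lt_def bp b0.
have := H (beta^-1).
have -> : beta^-1 * N2 - beta / 2 * beta^-1 ^+ 2 * N2 = N2 / (2 * beta).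
  by field; rewrite bp.
rewrite ler_pdivrMr ?mulr_gt0 //. lra.
Qed.

Lemma step {R : realType} (eta s0 s1 Gp N a dt : R) :
  0 < eta -> 0 < Gp -> 0 <= s0 -> 0 <= s1 -> 0 <= N -> 0 <= a ->
  dt <= N * a -> a ^+ 2 - 2 * dt + N ^+ 2 <= s0 ^+ 2 + s1 ^+ 2 * N ^+ 2 ->
  `| eta / Num.sqrt (Gp ^+ 2 + (1 + s1 ^+ 2) * N ^+ 2 + s0 ^+ 2)
     - eta / Num.sqrt (Gp ^+ 2 + a ^+ 2) | * dt
  <= eta / Num.sqrt (Gp ^+ 2 + (1 + s1 ^+ 2) * N ^+ 2 + s0 ^+ 2) * N ^+ 2 / 4
     + 2 * eta * s0 * (a ^+ 2 / Num.sqrt (Gp ^+ 2 + a ^+ 2) ^+ 2)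
     + 2 * eta * s1 * N * (a ^+ 2 / Num.sqrt (Gp ^+ 2 + a ^+ 2) ^+ 2).
Proof.
move=> e0 Gp0 s00 s10 N0 a0 dtle hnoise.
have Gpsq : 0 < Gp ^+ 2 by rewrite exprn_gt0.
have Tin : 0 <= Gp ^+ 2 + (1 + s1 ^+ 2) * N ^+ 2 + s0 ^+ 2.
  by apply: addr_ge0; [apply: addr_ge0; [exact: ltW | apply: mulr_ge0; [apply: addr_ge0 => //; exact: sqr_ge0 | exact: sqr_ge0]] | exact: sqr_ge0].
have Gin : 0 <= Gp ^+ 2 + a ^+ 2 by apply: addr_ge0; [exact: ltW | exact: sqr_ge0].
set T := Num.sqrt (Gp ^+ 2 + (1 + s1 ^+ 2) * N ^+ 2 + s0 ^+ 2).
set G := Num.sqrt (Gp ^+ 2 + a ^+ 2).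
have T2 : T ^+ 2 = Gp ^+ 2 + (1 + s1 ^+ 2) * N ^+ 2 + s0 ^+ 2 by rewrite sqr_sqrtr.
have G2 : G ^+ 2 = Gp ^+ 2 + a ^+ 2 by rewrite sqr_sqrtr.
have T0 : 0 <= T := sqrtr_ge0 _.
have G0 : 0 <= G := sqrtr_ge0 _.
have s1N : 0 <= s1 ^+ 2 * N ^+ 2 by apply: mulr_ge0; exact: sqr_ge0.
have Tp : 0 < T.
  rewrite sqrtr_gt0; apply: lt_le_trans Gpsq _.
  have : 0 <= (1 + s1 ^+ 2) * N ^+ 2 by apply: mulr_ge0; [apply: addr_ge0 => //; exact: sqr_ge0 | exact: sqr_ge0].
  have := sqr_ge0 s0. lra.
have Gp' : 0 < G by rewrite sqrtr_gt0; apply: lt_le_trans Gpsq _; have := sqr_ge0 a; lra.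
have rhs0 : 0 <= eta / T * N ^+ 2 / 4 + 2 * eta * s0 * (a ^+ 2 / G ^+ 2)
     + 2 * eta * s1 * N * (a ^+ 2 / G ^+ 2).
  have h1 : 0 <= eta / T * N ^+ 2 / 4.
    by apply: mulr_ge0 => //; apply: mulr_ge0; [apply: divr_ge0; exact: ltW | exact: sqr_ge0].
  have h2 : 0 <= a ^+ 2 / G ^+ 2 by apply: divr_ge0; exact: sqr_ge0.
  have h3 : 0 <= 2 * eta * s0 * (a ^+ 2 / G ^+ 2).
    by apply: mulr_ge0 => //; apply: mulr_ge0 => //; apply: mulr_ge0 => //; exact: ltW.
  have h4 : 0 <= 2 * eta * s1 * N * (a ^+ 2 / G ^+ 2).
    by apply: mulr_ge0 => //; apply: mulr_ge0 => //; apply: mulr_ge0 => //; apply: mulr_ge0 => //; exact: ltW.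
  lra.
have [dtn|dtp] := lerP dt 0.
  apply: le_trans rhs0; rewrite mulr_ge0_le0 //.
have eq1 : `|eta / T - eta / G| = eta * `|G - T| / (G * T).
  have -> : eta / T - eta / G = (eta * (G - T)) * (G * T)^-1.
    by field; rewrite !gt_eqF.
  by rewrite normrM normfV (gtr0_norm (mulr_gt0 Gp' Tp)) normrM (gtr0_norm e0).
set dl := `|G - T|.
have dl0 : 0 <= dl := normr_ge0 _.
set b := Num.sqrt ((1 + s1 ^+ 2) * N ^+ 2 + s0 ^+ 2).
have bin : 0 <= (1 + s1 ^+ 2) * N ^+ 2 + s0 ^+ 2 by apply: addr_ge0; [apply: mulr_ge0; [apply: addr_ge0 => //; exact: sqr_ge0 | exact: sqr_ge0] | exact: sqr_ge0].
have b2 : b ^+ 2 = (1 + s1 ^+ 2) * N ^+ 2 + s0 ^+ 2 by rewrite sqr_sqrtr.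
have b0 : 0 <= b := sqrtr_ge0 _.
have bN : N <= b.
  rewrite -(ler_pXn2r (n:=2)) ?nnegrE //; have := sqr_ge0 s0; lra.
have aG : a <= G by rewrite -(ler_pXn2r (n:=2)) ?nnegrE //; lra.
have bT : b <= T by rewrite -(ler_pXn2r (n:=2)) ?nnegrE //; lra.
have ab : dt <= a * b by apply: le_trans dtle _; rewrite mulrC; apply: ler_wpM2l.
have ab2 : (a - b) ^+ 2 <= 2 * (s0 ^+ 2 + s1 ^+ 2 * N ^+ 2).
  have -> : (a - b) ^+ 2 = a ^+ 2 + b ^+ 2 - 2 * (a * b) by ring.
  lra.
have dl2 : dl ^+ 2 <= (a - b) ^+ 2.
  have e1 : (dl * (G + T)) ^+ 2 = (`|a - b| * (a + b)) ^+ 2.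
    rewrite !exprMn /dl !real_normK ?num_real // -!exprMn.
    have -> : (G - T) * (G + T) = G ^+ 2 - T ^+ 2 by ring.
    have -> : (a - b) * (a + b) = a ^+ 2 - b ^+ 2 by ring.
    rewrite G2 T2 b2; congr (_ ^+ 2); ring.
  have e2 : (`|a - b| * (a + b)) ^+ 2 <= (`|a - b| * (G + T)) ^+ 2.
    rewrite ler_pXn2r ?nnegrE ?mulr_ge0 ?addr_ge0 //.
    by apply: ler_wpM2l => //; lra.
  have GT : 0 < (G + T) ^+ 2 by rewrite exprn_gt0 // addr_gt0.
  rewrite -(@real_normK _ (a - b)) ?num_real //.
  rewrite -(ler_pM2r GT) -!exprMn; lra.
rewrite eq1.
have key : dl * dt * G <= N ^+ 2 * G ^+ 2 / 4 + 2 * s0 * a ^+ 2 * T + 2 * s1 * N * a ^+ 2 * T.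
  have k1 : dl * dt * G <= dl * (N * a) * G.
    by apply: ler_wpM2r => //; apply: ler_wpM2l.
  have k2 : dl * (N * a) * G <= N ^+ 2 * G ^+ 2 / 4 + dl ^+ 2 * a ^+ 2.
    have := sqr_ge0 (N * G / 2 - dl * a).
    have -> : (N * G / 2 - dl * a) ^+ 2 = N ^+ 2 * G ^+ 2 / 4 + dl ^+ 2 * a ^+ 2 - dl * (N * a) * G.
      by field.
    lra.
  have k3 : dl ^+ 2 * a ^+ 2 <= 2 * (s0 ^+ 2 + s1 ^+ 2 * N ^+ 2) * a ^+ 2.
    by apply: ler_wpM2r; [exact: sqr_ge0 | lra].
  have s0T : s0 <= T by rewrite -(ler_pXn2r (n:=2)) ?nnegrE //; have := sqr_ge0 N; nra.
  have s1T : s1 * N <= T by rewrite -(ler_pXn2r (n:=2)) ?nnegrE ?mulr_ge0 //; have := sqr_ge0 s0; have := sqr_ge0 N; nra.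
  have k4 : s0 ^+ 2 * a ^+ 2 <= s0 * a ^+ 2 * T.
    have -> : s0 ^+ 2 * a ^+ 2 = (s0 * a ^+ 2) * s0 by ring.
    by apply: ler_wpM2l => //; apply: mulr_ge0 => //; exact: sqr_ge0.
  have k5 : (s1 ^+ 2 * N ^+ 2) * a ^+ 2 <= s1 * N * a ^+ 2 * T.
    have -> : s1 ^+ 2 * N ^+ 2 * a ^+ 2 = (s1 * N) * a ^+ 2 * (s1 * N) by ring.
    by apply: ler_wpM2l; [apply: mulr_ge0; [apply: mulr_ge0 | exact: sqr_ge0] |].
  lra.
have -> : eta * dl / (G * T) * dt = eta * (dl * dt * G) / (G ^+ 2 * T) by field; rewrite ?gt_eqF.
have -> : eta / T * N ^+ 2 / 4 + 2 * eta * s0 * (a ^+ 2 / G ^+ 2) + 2 * eta * s1 * N * (a ^+ 2 / G ^+ 2)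
  = eta * (N ^+ 2 * G ^+ 2 / 4 + 2 * s0 * a ^+ 2 * T + 2 * s1 * N * a ^+ 2 * T) / (G ^+ 2 * T).
  by field; rewrite ?gt_eqF.
rewrite ler_pM2r ?invr_gt0 ?mulr_gt0 ?exprn_gt0 //.
by rewrite ler_pM2l.
Qed.

Lemma Gacc_sq {R : realType} {d : nat} (gamma : R) (g : nat -> 'rV[R]_d) s :
  Gacc gamma g s ^+ 2 = gamma ^+ 2 + \sum_(1 <= k < s.+1) sqnorm (g k).
Proof.
rewrite /Gacc sqr_sqrtr // addr_ge0 ?sqr_ge0 //.
by apply: sumr_ge0 => i _; exact: sqnorm_ge0.
Qed.

Lemma Gacc_gt0 {R : realType} {d : nat} (gamma : R) (g : nat -> 'rV[R]_d) s :
  0 < gamma -> 0 < Gacc gamma g s.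
Proof.
move=> g0; rewrite /Gacc sqrtr_gt0; apply: lt_le_trans (exprn_gt0 2 g0) _.
rewrite lerDl; apply: sumr_ge0 => i _; exact: sqnorm_ge0.
Qed.

Lemma GaccS {R : realType} {d : nat} (gamma : R) (g : nat -> 'rV[R]_d) s : (1 <= s)%N ->
  Gacc gamma g s = Num.sqrt (Gacc gamma g s.-1 ^+ 2 + sqnorm (g s)).
Proof.
case: s => [//|s] _ /=; rewrite Gacc_sq {1}/Gacc big_nat_recr //= addrA; reflexivity.
Qed.

Lemma bigmax_seq {R : realType} (F : nat -> R) (x0 : R) (r : seq nat) :
  x0 <= \big[Num.max/x0]_(k <- r) F k /\
  forall s, s \in r -> F s <= \big[Num.max/x0]_(k <- r) F k.
Proof.
elim: r => [|a r [IH1 IH2]]; first by rewrite big_nil.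
rewrite big_cons; split; first by rewrite le_max IH1 orbT.
move=> s; rewrite in_cons => /orP[/eqP->|sr]; first by rewrite le_max lexx.
by rewrite le_max IH2 ?orbT.
Qed.

Lemma bigmax_ge {R : realType} (F : nat -> R) t s : (1 <= s <= t)%N ->
  F s <= \big[Num.max/F 1%N]_(1 <= k < t.+1) F k.
Proof.
move=> hs; apply: (bigmax_seq F (F 1%N) (index_iota 1 t.+1)).2.
by rewrite mem_index_iota ltnS.
Qed.
Theorem lemma7 (R : realType) (d : nat) (f : 'rV[R]_d -> R)
  (gradf : 'rV[R]_d -> 'rV[R]_d) (beta fstar eta gamma sigma0 sigma1 : R)
  (w g : nat -> 'rV[R]_d) :
  is_gradient f gradf ->
  smooth beta gradf ->
  (forall x, fstar <= f x) -> (exists x, f x = fstar) ->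
  0 < eta -> 0 < gamma -> 0 <= sigma0 -> 0 <= sigma1 ->
  (* AdaSGD update, for t >= 1 (w 1 arbitrary) *)
  (forall t, (1 <= t)%N -> w t.+1 = w t - eta_ada eta gamma g t *: g t) ->
  (* bounded affine noise, holding surely along the trajectory *)
  (forall t, (1 <= t)%N ->
     sqnorm (g t - gradf (w t)) <= sigma0 ^+ 2 + sigma1 ^+ 2 * sqnorm (gradf (w t))) ->
  forall t, (1 <= t)%N ->
    \sum_(1 <= s < t.+1)
        `|eta_dec eta gamma sigma0 sigma1 gradf w g s - eta_ada eta gamma g s|
          * dotv (gradf (w s)) (g s)
    <= Delta_bar f fstar w t / 4
       + 2^-1 * \sum_(1 <= s < t.+1)
                  eta_dec eta gamma sigma0 sigma1 gradf w g s * sqnorm (gradf (w s))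
       + 2 * eta * sigma0 * \sum_(1 <= s < t.+1) sqnorm (g s) / Gacc gamma g s ^+ 2
       + 8 * eta ^+ 2 * beta * sigma1 ^+ 2
           * (\sum_(1 <= s < t.+1) sqnorm (g s) / Gacc gamma g s ^+ 2) ^+ 2.
Proof.
move=> hg sm fs _ e0 g0 s00 s10 _ hn t t1.
set SS := \sum_(1 <= s < t.+1) sqnorm (g s) / Gacc gamma g s ^+ 2.
set AA := \sum_(1 <= s < t.+1) eta_dec eta gamma sigma0 sigma1 gradf w g s * sqnorm (gradf (w s)).
set Dl := Delta_bar f fstar w t.
have Dls s : (1 <= s <= t)%N -> f (w s) - fstar <= Dl.
  move=> hs; have := @bigmax_ge R (fun s => f (w s)) t s hs; rewrite /Dl /Delta_bar; lra.
have Dl0 : 0 <= Dl.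
  have := Dls 1%N; rewrite t1 => /(_ isT); have := fs (w 1%N); lra.
have hstep s : (1 <= s)%N ->
  `|eta_dec eta gamma sigma0 sigma1 gradf w g s - eta_ada eta gamma g s|
          * dotv (gradf (w s)) (g s)
  <= eta_dec eta gamma sigma0 sigma1 gradf w g s * sqnorm (gradf (w s)) / 4
     + 2 * eta * sigma0 * (sqnorm (g s) / Gacc gamma g s ^+ 2)
     + 2 * eta * sigma1 * enorm (gradf (w s)) * (sqnorm (g s) / Gacc gamma g s ^+ 2).
  move=> hs.
  rewrite /eta_dec /eta_ada (@GaccS R d gamma g s hs) -[sqnorm (gradf (w s))]enorm_sq -[sqnorm (g s)]enorm_sq.
  apply: step => //.
  - exact: Gacc_gt0.
  - exact: enorm_ge0.
  - exact: enorm_ge0.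
  - exact: cs.
  - rewrite !enorm_sq; have := hn s hs; rewrite sqnormB (dotvC (g s)); lra.
have H1 := @ler_sum_nat R 1 t.+1 _ _ (fun s hs => hstep s (proj1 (andP hs))).
rewrite !big_split /= -!mulr_suml -!mulr_sumr -/SS -/AA in H1.
have AA0 : 0 <= AA.
  apply: sumr_ge0 => i _; apply: mulr_ge0; last exact: sqnorm_ge0.
  by apply: divr_ge0; [exact: ltW | exact: sqrtr_ge0].
have SS0 : 0 <= SS.
  by apply: sumr_ge0 => i _; apply: divr_ge0; [exact: sqnorm_ge0 | exact: sqr_ge0].
set CC := \sum_(1 <= i < t.+1) (2 * eta * sigma1 * enorm (gradf (w i)) * (sqnorm (g i) / Gacc gamma g i ^+ 2)) in H1.
suff hC : CC <= Dl / 4 + 8 * eta ^+ 2 * beta * sigma1 ^+ 2 * SS ^+ 2.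
  by apply: le_trans H1 _; lra.
have [bn|bp] := ltP beta 0.
  have z (v : 'rV[R]_d) : enorm v = 0.
    have := sm v 0; rewrite !subr0 => h.
    have := enorm_ge0 (gradf v - gradf 0); have := enorm_ge0 v; nra.
  have -> : SS = 0.
    rewrite /SS big1 // => i _; rewrite -enorm_sq z expr2 !mul0r //.
  rewrite /CC big1; last by move=> i _; rewrite z mulr0 mul0r.
  rewrite expr0n /= mulr0; lra.
set K := Num.sqrt (2 * beta * Dl).
have K0 : 0 <= K := sqrtr_ge0 _.
have K2 : K ^+ 2 = 2 * beta * Dl by rewrite sqr_sqrtr // mulr_ge0 // mulr_ge0.
have NK s : (1 <= s <= t)%N -> enorm (gradf (w s)) <= K.
  move=> hs; rewrite -(ler_pXn2r (n:=2)) ?nnegrE ?enorm_ge0 // enorm_sq K2.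
  apply: le_trans (grad_bound hg beta fstar (w s) sm fs bp) _.
  by rewrite -mulrA -[X in _ <= X]mulrA ler_pM2l // ler_wpM2l // Dls.
have hC1 : CC <= 2 * eta * sigma1 * K * SS.
  rewrite /SS mulr_sumr; apply: ler_sum_nat => s hs.
  apply: ler_wpM2r; first by apply: divr_ge0; [exact: sqnorm_ge0 | exact: sqr_ge0].
  apply: ler_wpM2l; last exact: NK.
  by apply: mulr_ge0 => //; apply: mulr_ge0 => //; exact: ltW.
apply: le_trans hC1 _.
set P := eta * sigma1 * SS.
have P0 : 0 <= P by apply: mulr_ge0 => //; apply: mulr_ge0 => //; exact: ltW.
have -> : 2 * eta * sigma1 * K * SS = 2 * P * K by rewrite /P; ring.
have -> : 8 * eta ^+ 2 * beta * sigma1 ^+ 2 * SS ^+ 2 = 8 * beta * P ^+ 2 by rewrite /P; ring.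
have R0 : 0 <= Dl / 4 + 8 * beta * P ^+ 2.
  have : 0 <= beta * P ^+ 2 by apply: mulr_ge0 => //; exact: sqr_ge0.
  lra.
rewrite -(ler_pXn2r (n:=2)) ?nnegrE ?mulr_ge0 //; last exact: ltW.
have -> : (2 * P * K) ^+ 2 = 4 * P ^+ 2 * K ^+ 2 by ring.
rewrite K2.
have := sqr_ge0 (Dl / 4 - 8 * beta * P ^+ 2).
have -> : (Dl / 4 - 8 * beta * P ^+ 2) ^+ 2 = (Dl / 4 + 8 * beta * P ^+ 2) ^+ 2 - 4 * P ^+ 2 * (2 * beta * Dl).
  by field.
lra.
Qed.
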